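(* Let $G$ be a signed digraph that has an initial cycle. Then no Boolean network on $G$ is synchronizing.
   Context: A signed digraph on $V$ is $(V,E)$ with $E\subseteq V\times V\times\{-1,1\}$. A strong component is a maximal strongly connected induced subgraph; it is initial if no arc enters it from outside. An initial cycle is an initial strong component which is (isomorphic to) a cycle (a cycle has no repeated vertices; a loop is a cycle). A Boolean network (BN) is $f:\{0,1\}^V\to\{0,1\}^V$; its signed interaction digraph has a positive (negative) arc from $j$ to $i$ iff for some $x$ with $x_j=0$, $f_i(x+e_j)-f_i(x)$ is positive (negative). A BN on $G$ is one whose signed interaction digraph is $G$. $f^i(x)$ is $x$ with $x_i$ replaced by $f_i(x)$; $f^{i_1\cdots i_\ell}=f^{i_\ell}\circ\cdots\circ f^{i_1}$; $f$ is synchronizing if $f^w$ is constant for some word $w$. *)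

(* Defs.v *)
From mathcomp Require Import all_boot.
Set Implicit Arguments. Unset Strict Implicit. Unset Printing Implicit Defensive.

(* Signs: true = +1, false = -1.  A signed digraph on V is its arc set
   E ⊆ V × V × {-1,1}; an arc (j, i, s) goes from j to i with sign s. *)
Definition sdigraph (V : finType) := {set V * V * bool}.

(* Configurations x ∈ {0,1}^V, with false = 0, true = 1. *)
Definition config (V : finType) := {ffun V -> bool}.

Definition BN (V : finType) := config V -> config V.

Definition upd (V : finType) (x : config V) (i : V) (b : bool) : config V :=
  [ffun k => if k == i then b else x k].

(* Signed interaction digraph of f: positive (resp. negative) arc j -> i iff
   for some x with x_j = 0, f_i(x + e_j) - f_i(x) is positive (resp. negative). *)
Definition interaction (V : finType) (f : BN V) : sdigraph V :=
  [set a : V * V * bool |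
     [exists x : config V,
        (x a.1.1 == false) &&
        (if a.2 then (f x a.1.2 == false) && (f (upd x a.1.1 true) a.1.2 == true)
                else (f x a.1.2 == true) && (f (upd x a.1.1 true) a.1.2 == false))]].

Definition BN_on (V : finType) (G : sdigraph V) (f : BN V) : Prop :=
  interaction f = G.

Definition arcrel (V : finType) (G : sdigraph V) : rel V :=
  fun j i => ((j, i, true) \in G) || ((j, i, false) \in G).

Definition strong_component (V : finType) (G : sdigraph V) (C : {set V}) : Prop :=
  exists u : V, C = [set v | connect (arcrel G) u v && connect (arcrel G) v u].

Definition initial (V : finType) (G : sdigraph V) (C : {set V}) : Prop :=
  forall (j i : V) (s : bool), (j, i, s) \in G -> i \in C -> j \in C.

(* The subgraph of G induced by C is (isomorphic to) a cycle: there is a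
   cyclic ordering c of the vertices of C (without repetition; a single
   vertex gives a loop) and a sign for each arc such that the arcs of G with
   both ends in C are exactly the arcs (v, next c v) with their sign. *)
Definition induced_is_cycle (V : finType) (G : sdigraph V) (C : {set V}) : Prop :=
  exists (c : seq V) (sg : V -> bool),
    [/\ c != [::], uniq c, C = [set v | v \in c] &
        forall (j i : V) (s : bool), j \in C -> i \in C ->
          ((j, i, s) \in G) = ((i == next c j) && (s == sg j))].

Definition initial_cycle (V : finType) (G : sdigraph V) (C : {set V}) : Prop :=
  [/\ strong_component G C, initial G C & induced_is_cycle G C].

Definition fupd (V : finType) (f : BN V) (i : V) (x : config V) : config V :=
  upd x i (f x i).

(* f^{i_1 ... i_l} = f^{i_l} o ... o f^{i_1} *)
Definition fword (V : finType) (f : BN V) (w : seq V) (x : config V) : config V :=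
  foldl (fun y i => fupd f i y) x w.

Definition synchronizing (V : finType) (f : BN V) : Prop :=
  exists w : seq V, forall x y : config V, fword f w x = fword f w y.

(* Main.v *)
Require Import Defs.
From mathcomp Require Import all_boot.
Set Implicit Arguments. Unset Strict Implicit. Unset Printing Implicit Defensive.

Lemma upd_upd (V : finType) (x : config V) k a b : upd (upd x k a) k b = upd x k b.
Proof. by apply/ffunP=> v; rewrite !ffunE; case: (v == k). Qed.

Lemma upd_id (V : finType) (x : config V) k : upd x k (x k) = x.
Proof. by apply/ffunP=> v; rewrite !ffunE; case: eqP => // ->. Qed.

Lemma noarc (V : finType) (f : BN V) (k i : V) :
  (forall s, (k, i, s) \notin interaction f) ->
  forall x b, f (upd x k b) i = f x i.
Proof.
move=> H.
have key : forall z : config V, z k = false -> f (upd z k true) i = f z i.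
  move=> z zk.
  move: (H true) (H false); rewrite !inE /= => /existsPn /(_ z) + /existsPn /(_ z).
  rewrite zk /=.
  by case: (f z i); case: (f (upd z k true) i).
move=> x b.
set z := upd x k false.
have zk : z k = false by rewrite /z ffunE eqxx.
have E1 : upd x k b = upd z k b by rewrite /z upd_upd.
have E2 : x = upd z k (x k) by rewrite /z upd_upd upd_id.
have Eb : forall c, f (upd z k c) i = f z i.
  case; first exact: key.
  by rewrite -zk upd_id.
by rewrite E1 Eb {1}E2 Eb.
Qed.

Lemma indep (V : finType) (f : BN V) (i p : V) :
  (forall j s, j != p -> (j, i, s) \notin interaction f) ->
  forall x y : config V, x p = y p -> f x i = f y i.
Proof.
move=> H x y.
suff: forall n (x : config V), #|[pred k | x k != y k]| <= n -> x p = y p -> f x i = f y i.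
  by move/(_ _ x (leqnn _)).
elim=> [|n IH] {}x.
  rewrite leqn0 => /eqP/card0_eq Hc _.
  congr (f _ i); apply/ffunP=> v; move: (Hc v); rewrite !inE /=.
  by case: (x v); case: (y v).
move=> Hn xp.
case: (pickP [pred k | x k != y k]) => [k /= Hk | H0]; last first.
  congr (f _ i); apply/ffunP=> v; move: (H0 v) => /=.
  by case: (x v); case: (y v).
have kp : k != p by apply/eqP=> E; move: Hk; rewrite E xp eqxx.
set x' := upd x k (y k).
have -> : f x i = f x' i by rewrite /x' noarc // => s; apply: H.
apply: IH; last by rewrite /x' ffunE eq_sym (negbTE kp).
rewrite (cardD1 k) inE /= Hk add1n ltnS in Hn.
apply: leq_trans Hn; apply: subset_leq_card; apply/subsetP=> v.
rewrite !inE /x' ffunE.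
have [->|nvk] := eqVneq v k; first by rewrite eqxx.
by [].
Qed.

Theorem lemma2 (V : finType) (G : sdigraph V) :
  (exists C : {set V}, initial_cycle G C) ->
  forall f : BN V, BN_on G f -> ~ synchronizing f.
Proof.
move=> [C [_ Hinit [c [sg [cn0 cu EC Hcyc]]]]] f Hf [w Hw].
have inC : forall v, (v \in C) = (v \in c) by move=> v; rewrite EC inE.
have key : forall i, i \in c -> forall x y : config V,
    x (prev c i) != y (prev c i) -> f x i != f y i.
  move=> i ic x y Hxy.
  set p := prev c i.
  have pc : p \in C by rewrite inC mem_prev.
  have iC : i \in C by rewrite inC.
  have Hind : forall x y : config V, x p = y p -> f x i = f y i.
    apply: indep => j s jp; rewrite Hf; apply/negP => Hj.
    have jC : j \in C by apply: (Hinit j i s).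
    move: Hj; rewrite Hcyc // => /andP [/eqP ij _].
    by move: jp; rewrite /p ij (prev_next cu) eqxx.
  have Harc : (p, i, sg p) \in interaction f.
    by rewrite Hf Hcyc // /p (next_prev cu) !eqxx.
  move: Harc; rewrite inE /= => /existsP [z /andP [zp Hz]].
  set g := fun b => f (upd z p b) i.
  have gx : forall u : config V, f u i = g (u p).
    by move=> u; apply: Hind; rewrite ffunE eqxx.
  have gne : g false != g true.
    have gz : f z i = g false by rewrite gx (eqP zp).
    have gu : f (upd z p true) i = g true by rewrite gx ffunE eqxx.
    move: Hz; rewrite gz gu.
    by case: (sg p); case: (g false); case: (g true).
  rewrite !gx; move: Hxy gne.
  by case: (x p); case: (y p); rewrite //= eq_sym.
have inv : forall w (x y : config V), (forall v, v \in c -> x v != y v) ->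
    forall v, v \in c -> fword f w x v != fword f w y v.
  elim=> [|a w' IH] x y Hxy //=.
  apply: IH => v vc; rewrite !ffunE.
  have [eva|nva] := eqVneq v a; last exact: Hxy.
  subst v; apply: key => //.
  by apply: Hxy; rewrite mem_prev.
case: c cn0 cu EC Hcyc inC key inv => [//|v0 c'] _ _ _ _ _ _ inv.
have Hc : forall v, v \in v0 :: c' -> [ffun=> false] v != [ffun=> true] v :> bool.
  by move=> v _; rewrite !ffunE.
have := inv w [ffun=> false] [ffun=> true] Hc v0 (mem_head _ _).
by rewrite (Hw _ [ffun=> true]) eqxx.
Qed.
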